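(* Let $T=(V_T,E_T)$ be a finite tree, $r\in V_T$, $Q\subseteq V_T$ non-empty, and $Q'=Q\cup A_Q$ as defined below. Every $Q'$-centroid decomposition tree of $T$ has height $O(\log|Q|)$.
   Context: Root $T$ at $r$, let $V_Q$ be the set of nodes whose subtree contains a node of $Q$, $T_Q$ the subtree induced by $V_Q$, $A_Q=\{u\in V_Q:\deg_{T_Q}(u)\ge 3\}$ and $Q'=Q\cup A_Q$. For a tree $Z$ and $W\subseteq V_Z$, a node $u\in W$ is a $W$-centroid of $Z$ if every component of $Z-u$ contains at most $|W|/2$ nodes of $W$. A $Q'$-centroid decomposition tree $\mathcal D(T)=(Q',E_D)$ is obtained recursively: starting with $Z=T$ and $W=Q'$, choose a $W$-centroid $c$ of $Z$, remove it, and recurse on every component $Z'$ of $Z-c$ that contains a node of $W$ (with $W\cap V(Z')$ in place of $W$); for every recursion other than the first, $E_D$ contains an edge between the centroid chosen in that recursion and the centroid chosen in the calling recursion. (Such centroids always exist, and at each step there may be two to choose from.) *)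

(* Defs.v *)
From Stdlib Require List.
From mathcomp Require Import all_boot.
Set Implicit Arguments. Unset Strict Implicit. Unset Printing Implicit Defensive.

Section Defs.
Variables (V : finType) (e : rel V).

Definition is_tree : Prop :=
  symmetric e /\ irreflexive e /\ (forall x y : V, connect e x y) /\
  (forall c : seq V, 3 <= size c -> ~~ ucycleb e c).

Definition relS (S : {set V}) : rel V := [rel a b | [&& a \in S, b \in S & e a b]].

Definition comp (S : {set V}) (x : V) : {set V} :=
  [set y in S | connect (relS S) x y].

(* Rooting T at r: v is in the subtree of u iff u lies on the (unique)
   r-v path, i.e. v = u or removing u disconnects v from r. *)
Definition in_subtree (r u v : V) : bool :=
  (v == u) || ~~ connect (relS (~: [set u])) r v.

Definition VQ (r : V) (Q : {set V}) : {set V} :=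
  [set u | [exists q in Q, in_subtree r u q]].

Definition degTQ (r : V) (Q : {set V}) (u : V) : nat :=
  #|[set v in VQ r Q | e u v]|.

Definition AQ (r : V) (Q : {set V}) : {set V} :=
  [set u in VQ r Q | 3 <= degTQ r Q u].

Definition Qprime (r : V) (Q : {set V}) : {set V} := Q :|: AQ r Q.

Definition is_centroid (Z W : {set V}) (u : V) : bool :=
  [&& u \in W, W \subset Z &
   [forall x in Z :\ u, 2 * #|comp (Z :\ u) x :&: W| <= #|W| ]].

Definition child_comps (Z W : {set V}) (c : V) : {set {set V}} :=
  [set comp (Z :\ c) x | x in (Z :\ c) :&: W].

End Defs.

Inductive dtree (V : Type) : Type := DNode of V & seq (dtree V).

Fixpoint dheight (V : Type) (t : dtree V) : nat :=
  let: DNode _ ts := t in foldr (fun t' m => maxn (dheight t').+1 m) 0 ts.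

Inductive cdt (V : finType) (e : rel V) : {set V} -> {set V} -> dtree V -> Prop :=
| cdtN (Z W : {set V}) (c : V) (ts : seq (dtree V)) :
    is_centroid e Z W c ->
    List.Forall2 (fun C t => cdt e C (W :&: C) t) (enum (child_comps e Z W c)) ts ->
    cdt e Z W (DNode c ts).

(* Main.v *)
Require Import Defs.
From mathcomp Require Import all_boot zify.
Set Implicit Arguments. Unset Strict Implicit. Unset Printing Implicit Defensive.

Section T.
Variables (V : finType) (e : rel V).
Hypothesis esym : symmetric e.
Hypothesis eirr : irreflexive e.
Hypothesis econn : forall x y : V, connect e x y.
Hypothesis eacyc : forall c : seq V, 3 <= size c -> ~~ ucycleb e c.

Notation sep u x y := (~~ connect (relS e (~: [set u])) x y).

Lemma relS_sym S : symmetric (relS e S).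
Proof. by move=> a b; rewrite /relS /= andbCA esym. Qed.

Lemma cS S : connect_sym (relS e S).
Proof. exact: sym_connect_sym (relS_sym S). Qed.

Lemma pathS_all S x p : path (relS e S) x p -> all (fun y => y \in S) p.
Proof.
elim: p x => [|z p IH] x //= /andP [/and3P [_ zS _] pth].
by rewrite zS (IH z pth).
Qed.

Lemma connect_sub' (S S' : {set V}) x y : connect (relS e S) x y ->
  (forall z, connect (relS e S) x z -> z \in S') -> connect (relS e S') x y.
Proof.
case/connectP => p pth ->.
elim: p x pth => [|z p IH] x /= pth H; first exact: connect0.
case/andP: pth => xz pth.
apply: connect_trans (IH z pth _); last first.
  by move=> w cw; apply: H; exact: connect_trans (connect1 xz) cw.
apply: connect1; case/and3P: (xz) => _ _ exz.
by rewrite /relS /= exz (H x (connect0 _ _)) (H z (connect1 xz)).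
Qed.

Lemma reach_through x u : x != u ->
  exists2 w, connect (relS e (~:[set u])) x w & e w u.
Proof.
case/connectP: (econn x u) => p.
elim: p x => [|y p IH] x /= pth lst xu.
  by rewrite lst eqxx in xu.
case/andP: pth => exy pth.
case: (eqVneq y u) => [yu|yu].
  by exists x; [exact: connect0 | rewrite -yu].
case: (IH y pth lst yu) => w cw ewu.
exists w => //; apply: connect_trans cw; apply: connect1.
by rewrite /relS /= !inE xu yu exy.
Qed.

Lemma to_center x u y : x != u -> y != u -> sep u x y ->
  connect (relS e (~:[set y])) x u.
Proof.
move=> xu yu sxy; case: (reach_through xu) => w cw ewu.
have cw' : connect (relS e (~:[set y])) x w.
  apply: (connect_sub' (S:=~:[set u])) => [|z cz]; first exact: cw; rewrite !inE; apply/eqP => zy.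
  by subst; rewrite cz in sxy.
have wy : w != y by apply/eqP => wy; subst; rewrite cw in sxy.
apply: connect_trans cw' (connect1 _).
by rewrite /relS /= !inE wy ewu (eq_sym u) yu.
Qed.

Lemma nbr_sep u a b : e u a -> e u b -> a != b -> sep u a b.
Proof.
move=> ua ub ab; apply/negP => /connectP [p pth lst].
move: lst; case/shortenP: pth => p' pth' uq' _ lst.
have au : a != u by apply/eqP => au; subst; rewrite eirr in ua.
have szp : 0 < size p' by case: p' {pth' uq'} lst => //= lst; rewrite lst eqxx in ab.
have szc : 3 <= size (u :: a :: p') by rewrite /= ltnS ltnS.
move/negP: (eacyc szc); apply.
rewrite /ucycleb /= ua rcons_path -lst (esym b) ub andbT.
have pe : path e a p' by apply: sub_path pth' => x y /and3P [].
rewrite pe /=.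
have := pathS_all pth' => /allP al.
rewrite inE negb_or (eq_sym u) au /=.
apply/andP; split; last by [].
apply/negP => up; have := al u up; by rewrite !inE eqxx.
Qed.

Lemma median_uniq r u u' q1 q2 : u != u' -> r != u ->
  sep u r q1 -> sep u r q2 -> sep u q1 q2 ->
  sep u' r q1 -> sep u' r q2 -> sep u' q1 q2 -> q1 != u -> q2 != u -> False.
Proof.
move=> uu' ru s1 s2 s12 t1 t2 t12 q1u q2u.
have u'u : u' != u by rewrite eq_sym.
have key : forall x y, x != u -> y != u -> sep u x u' -> sep u y u' ->
    sep u' x y -> False.
  move=> x y xu yu sx sy sxy.
  have hx := to_center xu u'u sx; have hy := to_center yu u'u sy.
  move/negP: sxy; apply; apply: connect_trans hx _; by rewrite cS.
case: (boolP (connect (relS e (~:[set u])) r u')) => cr.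
  apply: (key q1 q2) => //.
    apply/negP => c; move/negP: s1; apply; apply: connect_trans cr _; by rewrite cS.
  apply/negP => c; move/negP: s2; apply; apply: connect_trans cr _; by rewrite cS.
case: (boolP (connect (relS e (~:[set u])) q1 u')) => c1.
  apply: (key r q2) => //.
  apply/negP => c; move/negP: s12; apply; apply: connect_trans c1 _; by rewrite cS.
exact: (key r q1).
Qed.

Lemma child_q r u a q : r != u -> e u a -> sep u r a -> in_subtree e r a q ->
  [/\ q != u, sep u r q & connect (relS e (~:[set u])) a q].
Proof.
move=> ru ua sra isub.
have au : a != u by apply/eqP => au; subst; rewrite eirr in ua.
case: (eqVneq q a) => [-> | qa]; first by split => //; exact: connect0.
move: isub; rewrite /in_subtree (negbTE qa) /= => saq.
have H1 : connect (relS e (~:[set a])) r u := to_center ru au sra.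
have qu : q != u by apply/eqP => qu; subst; rewrite H1 in saq.
have srq : sep u r q.
  apply/negP => c; move/negP: saq; apply; apply: (connect_sub' (S:=~:[set u])) => [|z cz]; first exact: c.
  by rewrite !inE; apply/eqP => za; subst; rewrite cz in sra.
have sqau : sep a q u.
  apply/negP => c; move/negP: saq; apply; apply: connect_trans H1 _; by rewrite cS.
have ua' : u != a by rewrite eq_sym.
have := to_center qa ua' sqau => h.
by split => //; rewrite cS.
Qed.


Definition Pm r (Q : {set V}) u (p : V * V) : bool :=
  [&& p.1 \in Q, p.2 \in Q, p.1 != u, p.2 != u, sep u r p.1, sep u r p.2 &
      sep u p.1 p.2].

Lemma AQ_ex r Q u : u \in AQ e r Q -> u != r -> exists p, Pm r Q u p.
Proof.
rewrite inE => /andP [uVQ deg] ur.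
have ru : r != u by rewrite eq_sym.
set N := [set v in VQ e r Q | e u v].
set N' := [set v in N | sep u r v].
have le1 : #|N :\: N'| <= 1.
  apply/card_le1_eqP => x y; rewrite !in_setD => /andP [xN' xN] /andP [yN' yN].
  move: xN'; rewrite /N' inE xN /= negbK => cx.
  move: yN'; rewrite /N' inE yN /= negbK => cy.
  move: xN yN; rewrite /N !inE => /andP [_ ux] /andP [_ uy].
  case: (eqVneq x y) => // xy.
  move/negP: (nbr_sep ux uy xy); case; apply: connect_trans _ cy; by rewrite cS.
have : 1 < #|N'|.
  have := cardsID N' N; have := subset_leq_card (subsetIr N N').
  have : 3 <= #|N| by exact: deg.
  lia.
case/card_gt1P => a [b [aN' bN' ab]].
move: aN' bN'; rewrite /N' /N !inE => /andP [/andP [aVQ ua] sra] /andP [/andP [bVQ ub] srb].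
move: aVQ bVQ => /existsP [q1 /andP [q1Q is1]] /existsP [q2 /andP [q2Q is2]].
case: (child_q ru ua sra is1) => q1u sr1 ca1.
case: (child_q ru ub srb is2) => q2u sr2 ca2.
exists (q1, q2); rewrite /Pm /= q1Q q2Q q1u q2u sr1 sr2 /=.
apply/negP => c12; move/negP: (nbr_sep ua ub ab); apply.
apply: connect_trans ca1 _; apply: connect_trans c12 _; by rewrite cS.
Qed.

Lemma AQ_bound r Q : #|AQ e r Q| <= #|Q| * #|Q| + 1.
Proof.
pose f u := odflt (r, r) [pick p : V * V | Pm r Q u p].
have fP : forall u, u \in AQ e r Q :\ r -> Pm r Q u (f u).
  move=> u; rewrite in_setD1 => /andP [ur uA].
  rewrite /f; case: pickP => [p //|none].
  by case: (AQ_ex uA ur) => p; rewrite none.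
have inj : {in AQ e r Q :\ r &, injective f}.
  move=> u u' hu hu' fe; case: (eqVneq u u') => // uu'; exfalso.
  have := fP u hu; have := fP u' hu'; rewrite -fe /Pm.
  case/and5P => _ _ _ _ /and3P [t1 t2 t12].
  case/and5P => _ _ q1u q2u /and3P [s1 s2 s12].
  move: hu; rewrite in_setD1 => /andP [ur _].
  have ru : r != u by rewrite eq_sym.
  exact: (median_uniq uu' ru s1 s2 s12 t1 t2 t12 q1u q2u).
rewrite (cardsD1 r) -(card_in_imset inj) -cardsX.
have : #|[set f x | x in AQ e r Q :\ r]| <= #|setX Q Q|.
  apply: subset_leq_card; apply/subsetP => p /imsetP [u hu ->].
  by have := fP u hu; rewrite /Pm => /and3P [h1 h2 _]; rewrite inE h1 h2.
by move=> h; rewrite addnC; apply: leq_add => //; case: (r \in _).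
Qed.

End T.

Lemma Forall2_inr A B (R : A -> B -> Prop) l1 l2 y :
  List.Forall2 R l1 l2 -> List.In y l2 -> exists2 x, List.In x l1 & R x y.
Proof.
elim=> [|x y' l1' l2' hr hF IH] //= [<-|iy]; first by exists x; [left|].
by case: (IH iy) => z iz hz; exists z; [right|].
Qed.

Lemma In_mem (T : eqType) (x : T) s : List.In x s -> x \in s.
Proof. elim: s => //= z s IH [->|h]; rewrite inE; first by rewrite eqxx. by rewrite IH ?orbT. Qed.

Lemma foldr_bound (V : Type) m (ts : seq (dtree V)) : 0 < m ->
  (forall t, List.In t ts -> 2 ^ (dheight t).+1 <= m) ->
  2 ^ foldr (fun t' m => maxn (dheight t').+1 m) 0 ts <= m.
Proof.
elim: ts => [|t ts IH] //= m0 H.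
have h1 := H t (or_introl erefl).
have h2 := IH m0 (fun t' i => H t' (or_intror i)).
rewrite /maxn; case: ltnP => _; [exact: h2 | exact: h1].
Qed.

Lemma cdt_h (V : finType) (e : rel V) n (Z W : {set V}) t :
  #|W| <= n -> cdt e Z W t -> 2 ^ dheight t <= #|W|.
Proof.
elim: n Z W t => [|n IH] Z W t hW ht; case: ht hW => {Z W t} Z W c ts hc hF hW;
  case/and3P: hc => cW _ /forallP hcent.
  have : 0 < #|W| by apply/card_gt0P; exists c.
  by rewrite leqn0 in hW; rewrite (eqP hW).
have W0 : 0 < #|W| by apply/card_gt0P; exists c.
rewrite /=; apply: foldr_bound => // t' /(Forall2_inr hF) [C inC hC].
move/In_mem: inC; rewrite mem_enum => /imsetP [x xin HC]; subst C.
have xZ : x \in Z :\ c by move: xin; rewrite inE => /andP[].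
have h2 := implyP (hcent x) xZ.
have xin2 : x \in W :&: Defs.comp e (Z :\ c) x.
  move: xin; rewrite inE => /andP [_ xW].
  by rewrite inE xW /Defs.comp inE xZ connect0.
have pos : 0 < #|W :&: Defs.comp e (Z :\ c) x| by apply/card_gt0P; exists x.
rewrite setIC in h2.
have := IH _ _ _ _ hC; rewrite expnS.
move=> /(_ ltac:(lia)) h3; lia.
Qed.

Theorem mainTheorem9 :
  exists k : nat,
    forall (V : finType) (e : rel V) (r : V) (Q : {set V}) (t : dtree V),
      is_tree e -> Q != set0 ->
      cdt e [set: V] (Qprime e r Q) t ->
      dheight t <= k * trunc_log 2 #|Q| + k.
Proof.
exists 3 => V e r Q t [esym [eirr [econn eacyc]]] Qn ht.
have h1 := cdt_h (leqnn _) ht.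
have h2 := AQ_bound esym eirr econn eacyc r Q.
have h3 : #|Qprime e r Q| <= #|Q| + #|AQ e r Q|.
  rewrite /Qprime cardsU; exact: leq_subr.
have n0 : 0 < #|Q| by rewrite card_gt0.
have h4 := trunc_log_ltn #|Q| (ltnSn 1).
move: h1 h2 h3 h4; set L := trunc_log 2 #|Q|; set h := dheight t.
rewrite expnS => h1 h2 h3 h4.
rewrite leqNgt; apply/negP => hl.
have : 2 ^ (L + L + 4) <= 2 ^ h by rewrite leq_exp2l //; lia.
rewrite !expnD.
move: h1 h4 (expn_gt0 2 L); move: (2 ^ L) (2 ^ h) => X Y.
rewrite (_ : 2 ^ 4 = 16) //.
nia.
Qed.
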